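(* Let $R$ be a finite chain ring with maximal ideal $\mathfrak{m}$, residue field $\mathbb{F}_q$, and natural projection $\pi:R\to\mathbb{F}_q$. Let $\lambda$ be a unit of $R$ with $\pi(\lambda)\neq\pi(\lambda)^{-1}$, and let $C$ be a free $\lambda$-constacyclic code of length $n$ over $R$ with $\Psi(C)=\langle F\rangle$, where $F$ divides $x^n-\lambda$. Then $C$ is an LCD code over $R$.
   Context: A finite chain ring is a finite commutative local ring whose ideals form a chain. A linear code $C\subseteq R^n$ is $\lambda$-constacyclic if $(\lambda c_{n-1},c_0,\dots,c_{n-2})\in C$ whenever $(c_0,\dots,c_{n-1})\in C$; free means free as an $R$-module. $\Psi:R^n\to R[x]/\langle x^n-\lambda\rangle$ is $(c_0,\dots,c_{n-1})\mapsto\sum c_ix^i$. $C$ is LCD if $C\cap C^\perp=\{\mathbf{0}\}$, where $C^\perp$ is the dual under the standard inner product $\sum_j u_jc_j$. *)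

(* Defs.v *)
From HB Require Import structures.
From mathcomp Require Import all_boot all_order all_algebra.
Set Implicit Arguments. Unset Strict Implicit. Unset Printing Implicit Defensive.
Import GRing.Theory.
Local Open Scope ring_scope.

Definition is_ideal (R : finComUnitRingType) (I : {set R}) : Prop :=
  0 \in I /\ (forall a b, a \in I -> b \in I -> a + b \in I)
  /\ (forall r a, a \in I -> r * a \in I).

(* Local ring: the non-units are closed under addition (so they form the
   unique maximal ideal). *)
Definition is_local_ring (R : finComUnitRingType) : Prop :=
  forall a b : R, a \isn't a GRing.unit -> b \isn't a GRing.unit ->
    a + b \isn't a GRing.unit.

Definition is_chain_ring (R : finComUnitRingType) : Prop :=
  is_local_ring R /\
  forall I J : {set R}, is_ideal I -> is_ideal J -> I \subset J \/ J \subset I.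

Definition is_linear_code (R : finComUnitRingType) n (C : {set 'rV[R]_n}) : Prop :=
  0 \in C /\ (forall u v, u \in C -> v \in C -> u + v \in C)
  /\ (forall (a : R) u, u \in C -> a *: u \in C).

Definition is_free_code (R : finComUnitRingType) n (C : {set 'rV[R]_n}) : Prop :=
  exists k (B : 'M[R]_(k, n)),
    (forall c, c \in C <-> exists u : 'rV[R]_k, c = u *m B) /\
    (forall u : 'rV[R]_k, u *m B = 0 -> u = 0).

(* lambda-constacyclic shift: (c_0,...,c_{n-1}) |-> (lambda c_{n-1}, c_0, ..., c_{n-2}). *)
Definition consta_shift (R : finComUnitRingType) n (lam : R) (c : 'rV[R]_n) : 'rV[R]_n :=
  \row_(i < n) ((if val i == 0%N then lam else 1) * c 0 (ord_pred i)).

Definition is_constacyclic (R : finComUnitRingType) n (lam : R) (C : {set 'rV[R]_n}) : Prop :=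
  forall c, c \in C -> consta_shift lam c \in C.

(* Psi : R^n -> R[x]/<x^n - lambda>, with residues represented by their
   (unique) representatives of degree < n. *)
Definition Psi (R : finComUnitRingType) n (c : 'rV[R]_n) : {poly R} :=
  \sum_(i < n) c 0 i *: 'X^i.

Definition modxn (R : finComUnitRingType) n (lam : R) (p : {poly R}) : {poly R} :=
  Pdiv.Ring.rmodp p ('X^n - lam%:P).

(* Psi(C) equals the ideal <F> of R[x]/<x^n - lambda>. *)
Definition Psi_generated_by (R : finComUnitRingType) n (lam : R)
    (C : {set 'rV[R]_n}) (F : {poly R}) : Prop :=
  forall p : {poly R},
    (exists2 c, c \in C & Psi c = p) <->
    (exists g : {poly R}, p = modxn n lam (g * F)).

Definition dual_code (R : finComUnitRingType) n (C : {set 'rV[R]_n}) : {set 'rV[R]_n} :=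
  [set u : 'rV[R]_n | [forall c in C, \sum_(j < n) u 0 j * c 0 j == 0]].

Definition is_LCD (R : finComUnitRingType) n (C : {set 'rV[R]_n}) : Prop :=
  C :&: dual_code C = [set 0].

(* Main.v *)
Require Import Defs.
From HB Require Import structures.
From mathcomp Require Import all_boot all_order all_algebra.
From mathcomp Require Import zify ring.
Import GRing.Theory.
Local Open Scope ring_scope.
Set Implicit Arguments. Unset Strict Implicit. Unset Printing Implicit Defensive.

Definition revn (R : nzRingType) (N : nat) (q : {poly R}) : {poly R} :=
  \poly_(i < N) q`_(N.-1 - i).

Section Rev.
Variable R : comNzRingType.
Implicit Types p q : {poly R}.

Lemma revnD N p q : revn N (p + q) = revn N p + revn N q.
Proof. by apply/polyP=> i; rewrite coefD !coef_poly coefD; case: ifP; rewrite ?addr0. Qed.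

Lemma revnZ N c p : revn N (c *: p) = c *: revn N p.
Proof. by apply/polyP=> i; rewrite coefZ !coef_poly coefZ; case: ifP; rewrite ?mulr0. Qed.

Lemma revnK N p : (size p <= N)%N -> revn N (revn N p) = p.
Proof.
move=> hs; apply/polyP=> i; rewrite !coef_poly.
case: (ltnP i N) => hi.
  rewrite ifT; last by lia.
  by congr (_`_ _); lia.
by rewrite nth_default; [reflexivity | exact: leq_trans hs hi].
Qed.

Lemma revn_mulX N q : (size q <= N)%N -> revn N.+1 (q * 'X) = revn N q.
Proof.
move=> hs; apply/polyP=> i; rewrite !coef_poly coefMX /=.
case: (ltnP i N) => hi.
  rewrite ltnS ltnW //.
  have -> : (N - i == 0)%N = false by apply/negbTE; lia.
  by congr (_`_ _); lia.
case: ifP => // hi1.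
have -> : i = N by lia.
by rewrite subnn eqxx.
Qed.

Lemma revn_add_shift N k q : (size q <= N)%N -> revn (N + k) q = revn N q * 'X^k.
Proof.
move=> hs; apply/polyP=> i; rewrite coefMXn !coef_poly.
case: (ltnP i k) => hik.
  rewrite ifT; last by lia.
  rewrite nth_default //; move: (size q) hs => s hs; lia.
case: (ltnP i (N + k)) => hi; case: (ltnP (i - k) N) => hi2 //; try lia.
by congr (_`_ _); lia.
Qed.

Lemma revnC N (c : R) : (0 < N)%N -> revn N c%:P = c *: 'X^(N.-1).
Proof.
move=> hN; apply/polyP=> i; rewrite coef_poly coefZ coefXn coefC.
case: (ltnP i N) => hi.
  case: (eqVneq i N.-1) => [->|ne]; first by rewrite subnn eqxx mulr1.
  have -> : (N.-1 - i == 0)%N = false by apply/negbTE; lia.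
  by rewrite mulr0.
have -> : (i == N.-1) = false by apply/negbTE; lia.
by rewrite mulr0.
Qed.

Lemma revn_mul a b (t h : {poly R}) : (0 < a)%N -> (0 < b)%N -> (size t <= a)%N -> (size h <= b)%N ->
  revn (a + b).-1 (t * h) = revn a t * revn b h.
Proof.
elim: a t => // a IH t _ hb ht hh.
case: a IH ht => [|a] IH ht.
  have [c ->] : exists c, t = c%:P.
    exists t`_0; apply/polyP => i; rewrite coefC; case: i => [|i] //=.
    by rewrite nth_default //; move: (size t) ht => s ht; lia.
  rewrite mul_polyC revnZ add1n /= revnC // -mul_polyC; congr (_ * _).
  by rewrite /= expr0 alg_polyC.
have -> : t = (\poly_(i < (size t).-1) t`_i.+1) * 'X + (t`_0)%:P.
  apply/polyP=> i; rewrite coefD coefMX coefC; case: i => [|i] /=; first by rewrite add0r.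
  rewrite addr0 coef_poly; case: ltnP => // hs; rewrite nth_default //; move: (size t) hs => s hs; lia.
set t' := \poly_(_ < _) _.
have st' : (size t' <= a.+1)%N.
  by rewrite (leq_trans (size_poly _ _)) //; move: (size t) ht => s ht; lia.
rewrite mulrDl revnD revnD mulrDl -mulrA [_ * h]mulrC mulrA.
have -> : (a.+2 + b).-1 = (a.+1 + b).-1.+1 by lia.
rewrite revn_mulX; last first.
  rewrite (leq_trans (size_mul_leq _ _)) //; move: (size t') (size h) st' hh => x y; lia.
rewrite IH //; congr (_ + _).
  by rewrite revn_mulX.
rewrite !mul_polyC revnZ revnC // -scalerAl; congr (_ *: _).
have -> : (a.+1 + b).-1.+1 = (b + a.+1)%N by lia.
by rewrite revn_add_shift // mulrC.
Qed.
End Rev.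

Lemma revn0 (R : comNzRingType) N : revn N (0 : {poly R}) = 0.
Proof. by apply/polyP=> i; rewrite coef_poly !coef0; case: ifP. Qed.

Lemma field_part (K : fieldType) (l : K) n (F h p k t : {poly K}) :
  l != l^-1 -> F * h = 'X^n - l%:P -> (size p <= n)%N -> p = k * F ->
  revn n p * F = t * ('X^n - l%:P) -> p = 0.
Proof.
move=> hl hFh hsp hpk hrev.
case: n hFh hsp hrev => [|n] hFh hsp hrev; first by apply/size_poly_leq0P.
set A := 'X^(n.+1) - l%:P in hFh hrev.
have monA : A \is monic by apply: monicXnsubC.
have sA : size A = n.+2 by apply: size_XnsubC.
have l0 : l != 0 by apply: contraNneq hl => ->; rewrite invr0.
have F0 : F != 0 by apply: contraTneq monA => F0; rewrite -hFh F0 mul0r monicE lead_coef0 eq_sym oner_eq0.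
have h0 : h != 0 by apply: contraTneq monA => h0; rewrite -hFh h0 mulr0 monicE lead_coef0 eq_sym oner_eq0.
have hr : revn n.+1 p = t * h.
  by apply: (mulIf F0); rewrite hrev -hFh; ring.
case: (eqVneq t 0) => [t0|t0].
  by move: hr; rewrite t0 mul0r => /(congr1 (revn n.+1)); rewrite revnK // revn0.
have sFh : (size F + size h).-1 = n.+2 by rewrite -size_mul // hFh.
have sth : ((size t + size h).-1 <= n.+1)%N by rewrite -size_mul // -hr size_poly.
set b := size h.
have b0 : (0 < b)%N by rewrite lt0n size_poly_eq0.
have st0 : (0 < size t)%N by rewrite lt0n size_poly_eq0.
have hp : p = revn (n.+2 - b) t * revn b h.
  rewrite -(revnK hsp) hr -revn_mul //; [congr revn| |];
  move: sth st0 b0; rewrite /b; move: (size t) (size h) => x y; lia.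
set hR := revn b h in hp.
have hB : revn n.+2 A = 1 - l *: 'X^(n.+1).
  apply/polyP=> i; rewrite coef_poly coefB coefB coef1 coefZ !coefXn coefC.
  case: (ltnP i n.+2) => hi.
    have -> : (n.+2.-1 - i == n.+1)%N = (i == 0)%N by apply/eqP/eqP; lia.
    have -> : (n.+2.-1 - i == 0)%N = (i == n.+1)%N by apply/eqP/eqP; lia.
    by case: (i == n.+1); rewrite ?mulr1 ?mulr0.
  have -> : (i == 0)%N = false by lia.
  have -> : (i == n.+1)%N = false by lia.
  by rewrite mulr0 subr0.
have hRB : hR %| revn n.+2 A.
  rewrite -hFh -sFh revn_mul //; first exact: dvdp_mulIr.
  by rewrite lt0n size_poly_eq0.
have cop : coprimep A (revn n.+2 A).
  rewrite -(coprimep_addl_mul (l%:P)) hB.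
  have -> : l%:P * A + (1 - l *: 'X^(n.+1)) = (1 - l ^+ 2)%:P.
    by rewrite /A polyCB polyC1 expr2 polyCM -!mul_polyC; ring.
  rewrite -alg_polyC coprimepZr ?coprimep1 //.
  rewrite subr_eq0; apply: contra hl => /eqP h1.
  by apply/eqP; rewrite -[l^-1]mulr1 h1 expr2 mulrA mulVf // mul1r.
have copF : coprimep F hR.
  apply: (coprimep_dvdl hRB); apply: (coprimep_dvdr _ cop).
  by rewrite -hFh dvdp_mulIl.
have dv : F * hR %| p.
  by rewrite Gauss_dvdp // {1}hpk dvdp_mulIr /= hp dvdp_mulIr.
apply/eqP; apply: contraT => p0.
have := dvdp_leq p0 dv.
have hR0 : hR`_(b.-1) != 0.
  rewrite /hR coef_poly ifT; last by move: b0; move: (b) => x; lia.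
  rewrite subnn; apply: contra l0 => /eqP hh0.
  have := congr1 (fun q : {poly K} => q`_0) hFh.
  by rewrite /= coef0M hh0 mulr0 /A coefB coefXn coefC /= sub0r => /eqP; rewrite eq_sym oppr_eq0.
have shR : size hR = b.
  apply/eqP; rewrite eqn_leq size_poly /= leqNgt; apply/negP => hlt.
  by move: hR0; rewrite nth_default ?eqxx //; move: hlt b0; move: (size hR) (b) => x y; lia.
have hR0' : hR != 0 by rewrite -size_poly_eq0 shR -lt0n.
rewrite size_mul // shR -/b sFh.
by move: hsp; move: (size p) => x; lia.
Qed.

Section RingFacts.
Variable R : finComUnitRingType.
Hypothesis loc : is_local_ring R.

Lemma nonunit_1B (x : R) : x \isn't a GRing.unit -> (1 - x) \is a GRing.unit.
Proof.
move=> hx; apply/negPn/negP => h; have := loc h hx.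
by rewrite subrK unitr1.
Qed.

Lemma nonunitM (x y : R) : x \isn't a GRing.unit -> x * y \isn't a GRing.unit.
Proof. by move=> hx; rewrite unitrM negb_and hx. Qed.

Lemma nonunit_of (a x : R) : a != 0 -> a * x = 0 -> x \isn't a GRing.unit.
Proof.
move=> a0 ax; apply/negP => xu; move/eqP: a0; apply.
by rewrite -(mulrK xu a) ax mul0r.
Qed.

Lemma nilp (x : R) : x \isn't a GRing.unit -> exists N, x ^+ N = 0.
Proof.
move=> hx.
set s := [seq x ^+ i | i <- iota 0 #|R|.+1].
have nu : ~~ uniq s.
  apply/negP => us; have := uniq_leq_size us (fun y _ => mem_enum R y).
  by rewrite -cardE size_map size_iota ltnn.
have [i [j [ij js e]]] := uniqPn 0 nu.
move: js e; rewrite size_map size_iota => js.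
rewrite !(nth_map 0%N) ?size_iota //; last by lia.
rewrite !nth_iota //; last by lia.
rewrite !add0n => e.
exists i.
have u : (1 - x * x ^+ (j - i).-1) \is a GRing.unit by apply: nonunit_1B; apply: nonunitM.
have h0 : x ^+ i * (1 - x * x ^+ (j - i).-1) = 0.
  rewrite mulrBr mulr1 -exprS -exprD.
  have -> : (i + (j - i).-1.+1)%N = j by lia.
  by rewrite e subrr.
by rewrite -(mulrK u (x ^+ i)) h0 mul0r.
Qed.

Lemma kill_list (s : seq R) : all (fun x => x \notin GRing.unit) s ->
  forall m (v : 'rV[R]_m), v != 0 ->
  exists r, r *: v != 0 /\ forall x, x \in s -> x *: (r *: v) = 0.
Proof.
elim: s => [|x s IH] /=.
  by move=> _ m v v0; exists 1; rewrite scale1r; split.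
move=> /andP [hx hs] m v v0.
have [r [rv0 hr]] := IH hs m v v0.
set w := r *: v in rv0 hr.
have [N xN] := nilp hx.
have exP : exists j, x ^+ j *: w == 0 by exists N; rewrite xN scale0r.
case: (ex_minnP exP) => j hj hmin.
case: j hj hmin => [|j] hj hmin; first by move: hj; rewrite expr0 scale1r (negbTE rv0).
exists (x ^+ j * r); rewrite -scalerA -/w; split.
  by apply/negP => /eqP h; have := hmin j; rewrite h eqxx => /(_ isT); rewrite ltnn.
move=> y; rewrite inE => /orP [/eqP ->|ys].
  by rewrite scalerA -exprS; apply/eqP.
by rewrite scalerA mulrC -scalerA hr // scaler0.
Qed.

Lemma kill m (v : 'rV[R]_m) : v != 0 ->
  exists r, r *: v != 0 /\ forall x, x \notin GRing.unit -> x *: (r *: v) = 0.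
Proof.
move=> v0.
have [r [h1 h2]] := @kill_list [seq x <- enum R | x \notin GRing.unit] (filter_all _ _) m v v0.
exists r; split => // x hx; apply: h2.
by rewrite mem_filter hx mem_enum.
Qed.

Definition Iset (z : R) : {set R} := [set s * z | s : R].

Lemma Iset_ideal z : is_ideal (Iset z).
Proof.
split; first by apply/imsetP; exists 0; rewrite ?mul0r.
split.
  move=> a b /imsetP [s1 _ ->] /imsetP [s2 _ ->]; apply/imsetP; exists (s1 + s2) => //.
  by rewrite mulrDl.
by move=> r a /imsetP [s _ ->]; apply/imsetP; exists (r * s) => //; rewrite mulrA.
Qed.

Lemma socle (a y : R) : is_chain_ring R -> a != 0 ->
  (forall x, x \notin GRing.unit -> y * x = 0) -> exists s, y = s * a.
Proof.
move=> [_ ch] a0 hy.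
have [sub|sub] := ch _ _ (Iset_ideal a) (Iset_ideal y).
  have : a \in Iset y by apply: (subsetP sub); apply/imsetP; exists 1; rewrite ?mul1r.
  case/imsetP => s _ e.
  case: (boolP (s \is a GRing.unit)) => su.
    by exists s^-1; rewrite e mulrA mulVr ?mul1r.
  by move/eqP: a0; rewrite e mulrC hy.
have : y \in Iset a by apply: (subsetP sub); apply/imsetP; exists 1; rewrite ?mul1r.
by case/imsetP => s _ e; exists s.
Qed.

End RingFacts.

Import Pdiv.Ring.

Section PolyFacts.
Variable R : finComUnitRingType.
Variable n : nat.
Variable lam : R.
Local Notation N := n.+1.
Local Notation A := ('X^N - lam%:P).

Lemma monA : A \is monic. Proof. exact: monicXnsubC. Qed.
Lemma sizeA : size A = N.+1. Proof. exact: size_XnsubC. Qed.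

Lemma Psi_poly (c : 'rV[R]_N) : Psi c = \poly_(i < N) c 0 (inord i).
Proof.
rewrite poly_def /Psi; apply: eq_bigr => i _; by rewrite inord_val.
Qed.

Lemma coef_Psi (c : 'rV[R]_N) (i : 'I_N) : (Psi c)`_i = c 0 i.
Proof. by rewrite Psi_poly coef_poly ltn_ord inord_val. Qed.

Lemma coef_Psi_big (c : 'rV[R]_N) j : (N <= j)%N -> (Psi c)`_j = 0.
Proof. by move=> hj; rewrite Psi_poly coef_poly ltnNge hj. Qed.

Lemma size_Psi (c : 'rV[R]_N) : (size (Psi c) <= N)%N.
Proof. by rewrite Psi_poly size_poly. Qed.

Lemma rmodp_addmul (x y : {poly R}) : rmodp (x * A + y) A = rmodp y A.
Proof. by rewrite Pdiv.RingMonic.rmodpD ?monA // Pdiv.RingMonic.rmodp_mull ?monA // add0r. Qed.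

Lemma size_rmodA (q : {poly R}) : (size (rmodp q A) <= N)%N.
Proof.
have := Pdiv.Ring.ltn_rmodpN0 q (monic_neq0 monA).
by rewrite sizeA ltnS.
Qed.

Lemma S_lemma (s : {poly R}) : (size s <= (N + N).-1)%N -> (rmodp s A)`_n = s`_n.
Proof.
move=> hs.
have e := Pdiv.RingMonic.rdivp_eq monA s.
set d := rdivp s A in e.
have hd : (size d <= n)%N.
  case: (eqVneq d 0) => [->|d0]; first by rewrite size_poly0.
  have : (size (d * A)%R <= (N + N).-1)%N.
    have -> : d * A = s - rmodp s A by apply/eqP; rewrite eq_sym subr_eq -e.
    rewrite (leq_trans (size_add _ _)) // size_opp geq_max hs /=.
    by rewrite (leq_trans (size_rmodA s)) //; lia.
  rewrite size_Mmonic ?monA // sizeA.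
  by move: (size d) => x; lia.
rewrite {2}e coefD mulrBr coefB coefMXn ltnSn coefMC.
by rewrite [d`_n]nth_default // mul0r subr0 add0r.
Qed.

Lemma KL (w : 'rV[R]_N) (q : {poly R}) :
  (rmodp (revn N (Psi w) * q) A)`_n = \sum_(j < N) w 0 j * (rmodp q A)`_j.
Proof.
have e := Pdiv.RingMonic.rdivp_eq monA q.
rewrite {1}e mulrDr mulrA rmodp_addmul S_lemma; last first.
  rewrite (leq_trans (size_mul_leq _ _)) //.
  have := size_rmodA q; have := size_poly N (fun i => (Psi w)`_(N.-1 - i)).
  by rewrite /revn; move: (size _) (size _) => x y; lia.
rewrite coefM (reindex_inj rev_ord_inj) /=; apply: eq_bigr => j _.
have hj := ltn_ord j.
rewrite /revn coef_poly ifT; last by lia.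
have -> : (n - (N - j.+1))%N = j by lia.
by rewrite coef_Psi.
Qed.

End PolyFacts.

Lemma revn_map (R : nzRingType) (K : nzRingType) (f : {rmorphism R -> K}) N (q : {poly R}) :
  map_poly f (revn N q) = revn N (map_poly f q).
Proof.
apply/polyP=> i; rewrite coef_map /= (coef_poly N) (coef_poly N) coef_map.
by case: ifP => //; rewrite rmorph0.
Qed.

Section Main.
Variables (R : finComUnitRingType) (K : fieldType) (pi : {rmorphism R -> K}) (n : nat) (lam : R).
Variables (C : {set 'rV[R]_n.+1}) (F : {poly R}).
Hypothesis chR : is_chain_ring R.
Hypothesis surj : forall k : K, exists r : R, pi r = k.
Hypothesis hlam : pi lam != (pi lam)^-1.
Hypothesis C0 : (0 : 'rV_n.+1) \in C.
Hypothesis CD : forall u v, u \in C -> v \in C -> u + v \in C.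
Hypothesis CZ : forall (a : R) u, u \in C -> a *: u \in C.
Variables (k : nat) (B : 'M[R]_(k, n.+1)).
Hypothesis hB : forall c, c \in C <-> exists u : 'rV[R]_k, c = u *m B.
Hypothesis hBfree : forall u : 'rV[R]_k, u *m B = 0 -> u = 0.
Hypothesis hPsi : Psi_generated_by lam C F.
Variable h : {poly R}.
Hypothesis hFh : 'X^(n.+1) - lam%:P = F * h.

Let loc := chR.1.
Let N := n.+1.
Let A := 'X^N - lam%:P.

Lemma pi0 x : x \notin GRing.unit -> pi x = 0.
Proof.
move=> hx; apply/eqP; apply: contraT => px.
have [r hr] := surj (pi x)^-1.
have hrx : r * x \notin GRing.unit by rewrite mulrC nonunitM.
have u := nonunit_1B loc hrx.
have := rmorph_unit pi u.
by rewrite rmorphB rmorph1 rmorphM hr mulVf // subrr unitfE eqxx.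
Qed.

Lemma main_pos c : c \in C -> c \in dual_code C -> c = 0.
Proof.
move=> cC cD.
have orth : forall c', c' \in C -> \sum_(j < N) c 0 j * c' 0 j = 0.
  by move=> c' hc'; move: cD; rewrite inE => /forallP /(_ c') /implyP /(_ hc') /eqP.
apply/eqP; apply: contraT => c0.
have [d [dC dorth d0 hd]] : exists d : 'rV[R]_N, [/\ d \in C,
    (forall c', c' \in C -> \sum_(j < N) d 0 j * c' 0 j = 0), d != 0 &
    forall x, x \notin GRing.unit -> x *: d = 0].
  have [r [d0 hd]] := kill loc c0.
  exists (r *: c); split => //; first exact: CZ.
  move=> c' hc'; under eq_bigr do rewrite mxE -mulrA.
  by rewrite -mulr_sumr orth // mulr0.
have [i0 di0] : exists i0, d 0 i0 != 0.
  apply/existsP; apply: contraNT d0 => /existsPn hall; apply/eqP/rowP => j.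
  by move: (hall j); rewrite negbK mxE => /eqP.
set a := d 0 i0 in di0.
have annd : forall j x, x \notin GRing.unit -> d 0 j * x = 0.
  by move=> j x hx; move: (hd x hx) => /rowP /(_ j); rewrite !mxE mulrC.
pose w := \row_j odflt 0 [pick s | d 0 j == s * a].
have hw : forall j, d 0 j = w 0 j * a.
  move=> j; rewrite mxE; case: pickP => [s /eqP //|none].
  by have [s e] := socle chR di0 (annd j); move: (none s); rewrite e eqxx.
have [v dv] := (hB d).1 dC.
have vann : forall i x, x \notin GRing.unit -> v 0 i * x = 0.
  move=> i x hx; have : (x *: v) *m B = 0 by rewrite -scalemxAl -dv hd.
  by move/hBfree => /rowP /(_ i); rewrite !mxE mulrC.
pose v' := \row_i odflt 0 [pick s | v 0 i == s * a].
have hv : forall i, v 0 i = v' 0 i * a.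
  move=> i; rewrite mxE; case: pickP => [s /eqP //|none].
  by have [s e] := socle chR di0 (vann i); move: (none s); rewrite e eqxx.
pose c2 := v' *m B.
have c2C : c2 \in C by apply/hB; exists v'.
have hdc2 : forall j, d 0 j = c2 0 j * a.
  move=> j; have ev : v = a *: v' by apply/rowP => i; rewrite mxE hv mulrC.
  by rewrite {1}dv ev -scalemxAl mxE mulrC.
have piw : forall j, pi (w 0 j) = pi (c2 0 j).
  move=> j; apply/eqP; rewrite -subr_eq0 -rmorphB; apply/eqP/pi0.
  apply: (nonunit_of di0).
  by rewrite mulrBr ![a * _]mulrC -hw -hdc2 subrr.
have wi0 : pi (w 0 i0) != 0.
  have h1 : (1 - w 0 i0) \notin GRing.unit.
    by apply: (nonunit_of di0); rewrite mulrBr mulr1 mulrC -hw subrr.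
  have wu : w 0 i0 \is a GRing.unit.
    by apply/negPn/negP => hn; move: (loc h1 hn); rewrite subrK unitr1.
  by rewrite -unitfE; apply: rmorph_unit.
have worth : forall c', c' \in C -> pi (\sum_(j < N) w 0 j * c' 0 j) = 0.
  move=> c' hc'; apply: pi0; apply: (nonunit_of di0).
  rewrite mulr_sumr -[RHS](dorth c' hc'); apply: eq_bigr => j _.
  by rewrite hw mulrA [a * _]mulrC.
pose W := Psi w.
pose r0 := rmodp (revn N W * F) A.
have r0c : forall m, pi (r0`_m) = 0.
  move=> m; case: (ltnP m N) => hm; last first.
    by rewrite nth_default ?rmorph0 // (leq_trans (size_rmodA _ _ _)).
  have -> : r0`_m = (rmodp (r0 * 'X^(n - m)) A)`_n.
    rewrite S_lemma. rewrite (coefMXn (n - m) r0 n).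
      rewrite ifF; last by lia.
      by congr (_`_ _); lia.
    rewrite (leq_trans (size_mul_leq _ _)) // size_polyXn.
    by have := size_rmodA n lam (revn N W * F); move: (size _) => x; lia.
  rewrite Pdiv.RingMonic.rmodp_mulml ?monA // -mulrA KL.
  have [c' hc' e'] := (hPsi (modxn N lam ('X^(n - m) * F))).2 (ex_intro _ ('X^(n - m)) erefl).
  rewrite /modxn in e'.
  rewrite mulrC -e' -[RHS](worth c' hc'); congr (pi _); apply: eq_bigr => j _.
  by rewrite coef_Psi.
have mr0 : map_poly pi r0 = 0 by apply/polyP => m; rewrite coef_map /= r0c coef0.
have mpM : forall p q : {poly R}, map_poly pi (p * q) = map_poly pi p * map_poly pi q.
  exact: (map_poly_is_monoid_morphism pi).2.
have mA : map_poly pi ('X^(n.+1) - lam%:P) = 'X^N - (pi lam)%:P by rewrite rmorphB /= map_polyXn map_polyC.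
have eK : revn N (map_poly pi W) * map_poly pi F =
    map_poly pi (rdivp (revn N W * F) A) * ('X^N - (pi lam)%:P).
  have := congr1 (map_poly pi) (Pdiv.RingMonic.rdivp_eq (monA n lam) (revn N W * F)).
  by rewrite rmorphD /= -/r0 mr0 addr0 !mpM revn_map mA.

have [kk ekk] : exists kk, Psi c2 = kk * F.
  have [g eg] := (hPsi (Psi c2)).1 (ex_intro2 _ _ c2 c2C erefl).
  rewrite /modxn in eg.
  have e := Pdiv.RingMonic.rdivp_eq (monA n lam) (g * F).
  exists (g - rdivp (g * F) A * h).
  rewrite eg mulrBl -mulrA [h * F]mulrC -hFh.
  by apply/eqP; rewrite eq_sym subr_eq addrC -e.
have mW : map_poly pi W = map_poly pi kk * map_poly pi F.
  rewrite -mpM -ekk; apply/polyP => j; rewrite !coef_map /=.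
  case: (ltnP j N) => hj; last by rewrite !coef_Psi_big.
  by have := piw (Ordinal hj); rewrite -!(coef_Psi _ (Ordinal hj)).
have mFh : map_poly pi F * map_poly pi h = 'X^N - (pi lam)%:P.
  by rewrite -mpM -hFh mA.
have sW : (size (map_poly pi W) <= N)%N.
  by rewrite /map_poly (leq_trans (size_poly _ _)) // size_Psi.
have := field_part hlam mFh sW mW eK.
move/(congr1 (fun p : {poly K} => p`_i0)); rewrite coef_map /= coef_Psi coef0 => /eqP.
by rewrite (negbTE wi0).
Qed.
End Main.

Unset Implicit Arguments.

Theorem corollary4p8 (R : finComUnitRingType) (K : fieldType)
    (pi : {rmorphism R -> K}) (n : nat) (lam : R)
    (C : {set 'rV[R]_n}) (F : {poly R}) :
  is_chain_ring R ->
  (forall k : K, exists r : R, pi r = k) ->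
  lam \is a GRing.unit ->
  pi lam != (pi lam)^-1 ->
  is_linear_code C -> is_free_code C -> is_constacyclic lam C ->
  Psi_generated_by lam C F ->
  (exists h : {poly R}, 'X^n - lam%:P = F * h) ->
  is_LCD C.
Proof.
move=> chR surj lamU hlam [C0 [CD CZ]] [k [B [hB hBfree]]] _ hPsi [h hFh].
apply/setP => c; rewrite in_set1 inE.
apply/andP/eqP => [[cC cD]|->]; last first.
  split => //; rewrite /dual_code inE; apply/forallP => c'; apply/implyP => _.
  by rewrite big1 // => j _; rewrite mxE mul0r.
case: n C c C0 CD CZ B hB hBfree hPsi hFh cC cD => [|n] C c C0 CD CZ B hB hBfree hPsi hFh cC cD.
  by apply/rowP => -[].
exact: (main_pos chR surj hlam C0 CZ hB hBfree hPsi hFh cC cD).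
Qed.
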